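(* In the setting of the context, let $E(t)=\tilde E e^{-\delta t}+\tilde S e^{(\beta/\gamma)\tilde R}e^{-\delta t}\int_{\varphi^{-1}(t)}^{u_0}e^{\delta\varphi(v)}dv$ for $t\ge0$. Then $E(\infty):=\lim_{t\to\infty}E(t)=0$, $E(t)>0$ on $[0,\infty)$, and $E$ attains its maximum $\max_{t\ge0}E(t)$ at some $t=T_1\in\{T: E'(T)=0\}$, where for $T>0$ \[ E'(T)=\Bigl(\frac{\delta}{\beta}+\tilde S e^{(\beta/\gamma)\tilde R}\varphi^{-1}(T)\Bigr)\psi\bigl(\varphi^{-1}(T)\bigr)-\delta\Bigl(N-\tilde S e^{(\beta/\gamma)\tilde R}\varphi^{-1}(T)+\frac{\gamma}{\beta}\log\varphi^{-1}(T)\Bigr). \]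
   Context: Let $\beta,\gamma,\delta>0$ be constants and $\tilde S,\tilde E,\tilde I,\tilde R$ real numbers with $N:=\tilde S+\tilde E+\tilde I+\tilde R>0$. Standing assumptions: (A1) $\tilde I>0$; (A2) $\tilde E>(\gamma/\delta)\tilde I$; (A3) $\tilde S>\delta\tilde E/(\beta\tilde I)$; (A4) $\tilde R\ge 0$ and $N>\tilde S e^{(\beta/\gamma)\tilde R}+\tilde R$. Let $\alpha$ be the unique solution in $(\tilde R,N)$ of $x=N-\tilde S e^{(\beta/\gamma)\tilde R}e^{-(\beta/\gamma)x}$, and assume (A5) $\tilde S<(\gamma/\beta)e^{(\beta/\gamma)(\alpha-\tilde R)}$. Put $u_0:=e^{-(\beta/\gamma)\tilde R}$, $u_\infty:=e^{-(\beta/\gamma)\alpha}$. Let $\psi$ be the unique function, continuous and positive on $(u_\infty,u_0]$ and $C^1$ on $(u_\infty,u_0)$, satisfying $\psi'(u)\psi(u)-\frac{\gamma+\delta}{u}\psi(u)=-\delta\,\frac{\beta N-\beta\tilde S e^{(\beta/\gamma)\tilde R}u+\gamma\log u}{u}$ on $(u_\infty,u_0)$ and $\psi(u_0)=\beta\tilde I$. Let $\varphi(u):=\int_u^{u_0}\frac{d\xi}{\xi\psi(\xi)}$; $\varphi$ is a strictly decreasing continuous bijection from $(u_\infty,u_0]$ onto $[0,\infty)$, $C^1$ on $(u_\infty,u_0)$, with inverse $\varphi^{-1}:[0,\infty)\to(u_\infty,u_0]$. *)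

(* Defs.v *)
From Stdlib Require Import Reals.
From Coquelicot Require Import Coquelicot.
Open Scope R_scope.

Definition phi_of (psi : R -> R) (u0 u : R) : R :=
  RInt (fun xi => / (xi * psi xi)) u u0.

Definition E_of (beta gamma delta St Et Rt u0 : R) (psi phiinv : R -> R)
  (t : R) : R :=
  Et * exp (- delta * t)
  + St * exp (beta / gamma * Rt) * exp (- delta * t)
    * RInt (fun v => exp (delta * phi_of psi u0 v)) (phiinv t) u0.

(* Main.v *)
Require Import Defs.
From Stdlib Require Import Reals Lra Psatz Classical.
From Coquelicot Require Import Coquelicot.
Open Scope R_scope.

Section Main.
Variables beta gamma delta St Et It Rt alpha : R.
Hypothesis Hbeta : 0 < beta.
Hypothesis Hgamma : 0 < gamma.
Hypothesis Hdelta : 0 < delta.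
Hypothesis A1 : 0 < It.
Hypothesis A2 : Et > gamma / delta * It.
Hypothesis A3 : St > delta * Et / (beta * It).
Hypothesis Halpha : Rt < alpha < St + Et + It + Rt /\
     alpha = St + Et + It + Rt
             - St * exp (beta / gamma * Rt) * exp (- (beta / gamma) * alpha).
Hypothesis A5 : St < gamma / beta * exp (beta / gamma * (alpha - Rt)).
Variable psi : R -> R.
Hypothesis Hpsi_pos : forall u, exp (- (beta / gamma) * alpha) < u
                        <= exp (- (beta / gamma) * Rt) -> 0 < psi u.
Hypothesis Hpsi_cont : forall u, exp (- (beta / gamma) * alpha) < u
                         < exp (- (beta / gamma) * Rt) -> continuous psi u.
Hypothesis Hpsi_cont_u0 : filterlim psi (at_left (exp (- (beta / gamma) * Rt)))
                    (locally (psi (exp (- (beta / gamma) * Rt)))).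
Hypothesis Hpsi_C1 : forall u, exp (- (beta / gamma) * alpha) < u
                       < exp (- (beta / gamma) * Rt) ->
     ex_derive psi u /\ continuous (Derive psi) u.
Hypothesis Hpsi_ode : forall u, exp (- (beta / gamma) * alpha) < u
                        < exp (- (beta / gamma) * Rt) ->
     Derive psi u * psi u - (gamma + delta) / u * psi u
     = - delta * ((beta * (St + Et + It + Rt)
                   - beta * St * exp (beta / gamma * Rt) * u
                   + gamma * ln u) / u).
Hypothesis Hpsi_u0 : psi (exp (- (beta / gamma) * Rt)) = beta * It.
Variable phiinv : R -> R.
Hypothesis Hphiinv : forall t, 0 <= t ->
     exp (- (beta / gamma) * alpha) < phiinv t <= exp (- (beta / gamma) * Rt)
     /\ phi_of psi (exp (- (beta / gamma) * Rt)) (phiinv t) = t.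

Definition a := exp (- (beta / gamma) * alpha).
Definition b := exp (- (beta / gamma) * Rt).
Definition N := St + Et + It + Rt.
Definition K := St * exp (beta / gamma * Rt).
Definition psit x := psi (Rmin x b).
Definition ft x := / (x * psit x).

Lemma Et_pos : 0 < Et.
Proof.
  assert (0 < gamma / delta * It) by (apply Rmult_lt_0_compat; [apply Rdiv_lt_0_compat|]; lra).
  lra.
Qed.

Lemma St_pos : 0 < St.
Proof.
  pose proof Et_pos.
  assert (0 < delta * Et / (beta * It)).
  { apply Rdiv_lt_0_compat; apply Rmult_lt_0_compat; lra. }
  lra.
Qed.

Lemma K_pos : 0 < K.
Proof. unfold K. pose proof St_pos. pose proof (exp_pos (beta / gamma * Rt)). nra. Qed.

Lemma a_pos : 0 < a.
Proof. apply exp_pos. Qed.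

Lemma a_lt_b : a < b.
Proof.
  unfold a, b. apply exp_increasing.
  assert (0 < beta / gamma) by (apply Rdiv_lt_0_compat; lra).
  destruct Halpha as [[H1 H2] _]. nra.
Qed.

Lemma Kb : K * b = St.
Proof.
  unfold K, b. rewrite Rmult_assoc, <- exp_plus.
  replace (beta / gamma * Rt + - (beta / gamma) * Rt) with 0 by ring.
  rewrite exp_0; ring.
Qed.

Lemma ln_a : gamma / beta * ln a = - alpha.
Proof. unfold a. rewrite ln_exp. field. lra. Qed.

Lemma ln_b : gamma / beta * ln b = - Rt.
Proof. unfold b. rewrite ln_exp. field. lra. Qed.

Lemma Qa : N - K * a + gamma / beta * ln a = 0.
Proof.
  rewrite ln_a. unfold N, K, a. destruct Halpha as [_ H]. lra.
Qed.

Lemma K_lt : K * a < gamma / beta.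
Proof.
  unfold K, a.
  assert (H := A5).
  rewrite Rmult_assoc, <- exp_plus.
  assert (exp (beta / gamma * Rt + - (beta / gamma) * alpha) * exp (beta / gamma * (alpha - Rt)) = 1).
  { rewrite <- exp_plus. replace (_ + _) with 0 by ring. apply exp_0. }
  pose proof (exp_pos (beta / gamma * Rt + - (beta / gamma) * alpha)).
  pose proof (exp_pos (beta / gamma * (alpha - Rt))).
  assert (0 < gamma / beta) by (apply Rdiv_lt_0_compat; lra).
  nra.
Qed.

Lemma psit_eq x : x <= b -> psit x = psi x.
Proof. intro; unfold psit; rewrite Rmin_left; auto. Qed.

Lemma psit_pos x : a < x -> 0 < psit x.
Proof.
  intro; unfold psit. apply Hpsi_pos. fold a b. pose proof a_lt_b.
  split. apply Rmin_glb_lt; lra. apply Rmin_r.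
Qed.

Lemma psit_cont x : a < x -> continuous psit x.
Proof.
  intro Hx. pose proof a_lt_b.
  destruct (Rlt_or_le x b) as [Hxb|Hxb].
  - apply continuous_ext_loc with psi.
    + apply locally_interval with (Finite a) (Finite b); simpl; auto.
      intros y Hy1 Hy2. rewrite psit_eq; lra.
    + apply Hpsi_cont; fold a b; lra.
  - destruct Hxb as [Hxb|Hxb].
    + apply continuous_ext_loc with (fun _ => psi b).
      * apply locally_interval with (Finite b) p_infty; simpl; auto.
        intros y Hy1 _. unfold psit. rewrite Rmin_right; lra.
      * apply continuous_const.
    + subst x. unfold continuous.
      apply (filterlim_locally (F := locally b)). intro eps.
      assert (H1 := proj1 (filterlim_locally (F := at_left b) psi (psi b)) Hpsi_cont_u0 eps).
      unfold at_left, within in H1.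
      eapply filter_imp; [|exact H1].
      intros y Hy. unfold psit. rewrite (Rmin_left b b) by lra.
      destruct (Rlt_or_le y b) as [Hyb|Hyb].
      * rewrite Rmin_left by lra. apply Hy; auto.
      * rewrite Rmin_right by lra. apply ball_center.
Qed.


Lemma ft_cont x : a < x -> continuous ft x.
Proof.
  intro Hx. pose proof a_pos. pose proof (psit_pos x Hx).
  apply continuity_pt_filterlim.
  assert (Hc : continuity_pt (fun y => y * psit y) x).
  { exact (continuity_pt_mult id psit x (continuity_pt_id x)
             (proj2 (continuity_pt_filterlim psit x) (psit_cont x Hx))). }
  exact (continuity_pt_inv (fun y => y * psit y) x Hc
           ltac:(apply Rgt_not_eq; apply Rmult_lt_0_compat; lra)).
Qed.

Lemma ft_pos x : a < x -> 0 < ft x.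
Proof.
  intro Hx. pose proof a_pos. pose proof (psit_pos x Hx). unfold ft.
  apply Rinv_0_lt_compat, Rmult_lt_0_compat; lra.
Qed.

Lemma gen_ex_RInt (f : R -> R) u v :
  (forall x, a < x -> continuous f x) -> a < u -> a < v -> ex_RInt f u v.
Proof.
  intros Hf Hu Hv. apply (ex_RInt_continuous (V:=R_CompleteNormedModule)). intros z [Hz _]. apply Hf.
  apply Rlt_le_trans with (Rmin u v); auto. apply Rmin_glb_lt; auto.
Qed.

Lemma gen_derive (f : R -> R) u :
  (forall x, a < x -> continuous f x) -> a < u ->
  is_derive (fun u => RInt f u b) u (- f u).
Proof.
  intros Hf Hu. pose proof a_lt_b.
  apply (is_derive_RInt' f (fun u => RInt f u b) u b).
  - apply locally_interval with (Finite a) p_infty; simpl; auto.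
    intros y Hy _. apply (RInt_correct (V:=R_CompleteNormedModule)). apply gen_ex_RInt; auto; lra.
  - apply Hf; auto.
Qed.

Definition Phi u := RInt ft u b.

Lemma Phi_derive u : a < u -> is_derive Phi u (- ft u).
Proof. intro; apply gen_derive; auto. exact ft_cont. Qed.

Lemma Phi_cont u : a < u -> continuous Phi u.
Proof. intro Hu. apply continuity_pt_filterlim. apply derivable_continuous_pt. exists (- ft u). apply is_derive_Reals. apply Phi_derive; auto. Qed.

Lemma Phi_decr x y : a < x -> x < y -> Phi y < Phi x.
Proof.
  intros Hx Hxy.
  assert (H := incr_function (fun u => - Phi u) (Finite a) p_infty ft).
  simpl in H.
  assert (- Phi x < - Phi y); [|lra].
  apply H; auto.
  - intros z Hz _.
    replace (ft z) with (- - ft z) by ring.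
    apply (is_derive_opp Phi z (- ft z)). apply Phi_derive; auto.
  - intros; apply ft_pos; auto.
Qed.

Lemma Phi_b : Phi b = 0.
Proof. unfold Phi. exact (RInt_point (V:=R_CompleteNormedModule) b ft). Qed.

Lemma Phi_eq u : a < u <= b -> phi_of psi b u = Phi u.
Proof.
  intros [Hu1 Hu2]. unfold phi_of, Phi. apply RInt_ext.
  intros x Hx. rewrite Rmin_left in Hx by lra. rewrite Rmax_right in Hx by lra.
  unfold ft. rewrite psit_eq; auto; lra.
Qed.

Definition w := phiinv.

Lemma w_prop t : 0 <= t -> a < w t <= b /\ Phi (w t) = t.
Proof.
  intro Ht. destruct (Hphiinv t Ht) as [H1 H2]. fold a b in H1, H2.
  split; auto. rewrite <- Phi_eq; auto.
Qed.

Lemma w_0 : w 0 = b.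
Proof.
  destruct (w_prop 0 (Rle_refl 0)) as [[H1 H2] H3].
  destruct H2 as [H2|H2]; auto.
  pose proof (Phi_decr _ _ H1 H2). rewrite Phi_b in H. lra.
Qed.

Lemma w_lt_b t : 0 < t -> w t < b.
Proof.
  intro Ht. destruct (w_prop t (Rlt_le _ _ Ht)) as [[H1 H2] H3].
  destruct H2 as [H2|H2]; auto. rewrite H2, Phi_b in H3. lra.
Qed.

Lemma Phi_le x y : a < x -> x <= y -> Phi y <= Phi x.
Proof.
  intros Hx [H|H]. left; apply Phi_decr; auto. subst; lra.
Qed.

Lemma w_gt t lo : 0 <= t -> a < lo -> t < Phi lo -> lo < w t.
Proof.
  intros Ht Hlo Htl. destruct (w_prop t Ht) as [[H1 H2] H3].
  destruct (Rlt_or_le lo (w t)) as [H|H]; auto.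
  pose proof (Phi_le _ _ H1 H). lra.
Qed.

Lemma w_lt t hi : 0 <= t -> a < hi -> Phi hi < t -> w t < hi.
Proof.
  intros Ht Hhi Hth. destruct (w_prop t Ht) as [[H1 H2] H3].
  destruct (Rlt_or_le (w t) hi) as [H|H]; auto.
  pose proof (Phi_le _ _ Hhi H). lra.
Qed.


Lemma w_cont T : 0 <= T -> forall eps, 0 < eps -> exists del, 0 < del /\
  forall t, 0 <= t -> Rabs (t - T) < del -> Rabs (w t - w T) < eps.
Proof.
  intros HT eps Heps. destruct (w_prop T HT) as [[H1 H2] H3].
  set (x0 := w T) in *.
  set (lo := Rmax (x0 - eps/2) ((a + x0)/2)).
  assert (Hlo1 : a < lo). { unfold lo. apply Rlt_le_trans with ((a+x0)/2). lra. apply Rmax_r. }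
  assert (Hlo2 : lo < x0). { unfold lo. apply Rmax_lub_lt; lra. }
  assert (Hlo3 : x0 - eps/2 <= lo) by apply Rmax_l.
  assert (HPlo : T < Phi lo) by (rewrite <- H3; apply Phi_decr; auto).
  destruct H2 as [H2|H2].
  - set (hi := Rmin (x0 + eps/2) b).
    assert (Hhi1 : x0 < hi). { unfold hi. apply Rmin_glb_lt; lra. }
    assert (Hhi3 : hi <= x0 + eps/2) by apply Rmin_l.
    assert (HPhi : Phi hi < T) by (rewrite <- H3; apply Phi_decr; auto).
    exists (Rmin (Phi lo - T) (T - Phi hi)). split.
    + apply Rmin_glb_lt; lra.
    + intros t Ht Htd.
      assert (Hd1 := Rmin_l (Phi lo - T) (T - Phi hi)).
      assert (Hd2 := Rmin_r (Phi lo - T) (T - Phi hi)).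
      apply Rabs_def2 in Htd. destruct Htd.
      assert (lo < w t) by (apply w_gt; auto; lra).
      assert (w t < hi) by (apply w_lt; auto; lra).
      apply Rabs_def1; lra.
  - exists (Phi lo - T). split; [lra|].
    intros t Ht Htd. apply Rabs_def2 in Htd. destruct Htd.
    assert (lo < w t) by (apply w_gt; auto; lra).
    destruct (w_prop t Ht) as [[H6 H7] _].
    apply Rabs_def1; lra.
Qed.

Definition W t := w (Rmax t 0).

Lemma W_eq t : 0 <= t -> W t = w t.
Proof. intro; unfold W; rewrite Rmax_left; auto. Qed.

Lemma W_cont T : 0 <= T -> continuity_pt W T.
Proof.
  intros HT eps Heps. destruct (w_cont T HT eps Heps) as [del [Hdel H]].
  exists del. split; auto. intros t [_ Ht]. simpl in *. unfold R_dist in *.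
  rewrite (W_eq T HT). unfold W. apply H. apply Rmax_r.
  apply Rle_lt_trans with (Rabs (t - T)); auto.
  destruct (Rle_or_lt 0 t).
  - rewrite Rmax_left; lra.
  - rewrite Rmax_right by lra. rewrite !Rabs_left1; lra.
Qed.

Lemma W_range t : a < W t <= b.
Proof. unfold W. apply w_prop. apply Rmax_r. Qed.

Lemma w_derive T : 0 < T -> is_derive w T (- (w T * psit (w T))).
Proof.
  intro HT. destruct (w_prop T (Rlt_le _ _ HT)) as [[H1 H2] H3].
  pose proof (w_lt_b T HT) as H2'.
  set (x0 := w T) in *.
  pose proof (ft_pos x0 H1) as Hf. pose proof (psit_pos x0 H1) as Hp.
  set (d := - ft x0).
  assert (Hd : d < 0) by (unfold d; lra).
  replace (- (x0 * psit x0)) with (/ d).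
  2:{ unfold d, ft. pose proof a_pos. field. split; apply Rgt_not_eq; lra. }
  apply is_derive_Reals. intros eps Heps.
  assert (HD := proj1 (is_derive_Reals _ _ _) (Phi_derive x0 H1)).
  fold d in HD.
  set (e' := Rmin (- d / 2) (eps * d * d / 2)).
  assert (He'1 : e' <= - d / 2) by apply Rmin_l.
  assert (He'2 : e' <= eps * d * d / 2) by apply Rmin_r.
  assert (He' : 0 < e'). { apply Rmin_glb_lt. lra. 
     assert (0 < d * d) by nra. nra. }
  destruct (HD e' He') as [del1 Hdel1].
  destruct (w_cont T (Rlt_le _ _ HT) del1 (cond_pos del1)) as [del2 [Hdel2 Hw]].
  assert (Hdp : 0 < Rmin del2 T) by (apply Rmin_glb_lt; lra).
  exists (mkposreal _ Hdp). simpl. intros h Hh0 Hh.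
  assert (Hh1 := Rlt_le_trans _ _ _ Hh (Rmin_l _ _)).
  assert (Hh2 := Rlt_le_trans _ _ _ Hh (Rmin_r _ _)).
  assert (Ht : 0 < T + h) by (apply Rabs_def2 in Hh2; lra).
  assert (Hk := Hw (T + h) (Rlt_le _ _ Ht) ltac:(replace (T + h - T) with h by ring; auto)).
  fold x0 in Hk.
  set (k := w (T + h) - x0) in *.
  destruct (w_prop (T+h) (Rlt_le _ _ Ht)) as [_ Hph].
  assert (Hk0 : k <> 0).
  { intro Hk0. assert (w (T+h) = x0) by (unfold k in Hk0; lra).
    rewrite H in Hph. lra. }
  assert (Hq := Hdel1 k Hk0 Hk).
  replace (x0 + k) with (w (T + h)) in Hq by (unfold k; ring).
  rewrite Hph, H3 in Hq.
  replace (T + h - T) with h in Hq by ring.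
  replace ((w (T + h) - w T) / h) with (/ (h / k)) by (fold x0 k; field; auto).
  set (q := h / k) in *.
  apply Rabs_def2 in Hq. destruct Hq as [Hq1 Hq2].
  assert (Hqneg : q < d / 2) by lra.
  assert (Hqd : d * d / 2 < q * d) by nra.
  assert (Hq0 : q <> 0) by lra.
  replace (/ q - / d) with ((d - q) * / (q * d)) by (field; split; lra).
  assert (HX : 0 < / (q * d)) by (apply Rinv_0_lt_compat; nra).
  assert (HXe : / (q * d) * (q * d) = 1) by (field; split; lra).
  set (X := / (q * d)) in *.
  rewrite Rabs_mult, (Rabs_pos_eq X) by lra.
  assert (Rabs (d - q) < e') by (apply Rabs_def1; lra).
  assert (0 <= Rabs (d - q)) by apply Rabs_pos.
  assert (Rabs (d - q) * X < e' * X) by (apply Rmult_lt_compat_r; auto).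
  assert (e' * X <= eps * d * d / 2 * X) by (apply Rmult_le_compat_r; lra).
  assert (eps * d * d / 2 * X <= eps * (q * d) * X) by (apply Rmult_le_compat_r; [lra|]; nra).
  nra.
Qed.


Definition gt v := exp (delta * Phi v).

Lemma gt_derive v : a < v -> is_derive gt v (delta * (- ft v) * gt v).
Proof.
  intro Hv. unfold gt. auto_derive.
  - eexists. apply Phi_derive; auto.
  - replace (Derive (fun x => Phi x) v) with (- ft v). ring.
    symmetry; apply is_derive_unique, Phi_derive; auto.
Qed.


Lemma gt_cont v : a < v -> continuous gt v.
Proof.
  intro Hv. apply continuity_pt_filterlim. apply derivable_continuous_pt.
  eexists. apply is_derive_Reals. apply gt_derive; auto.
Qed.

Lemma gt_pos v : 0 < gt v.
Proof. apply exp_pos. Qed.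

Definition J u := RInt gt u b.

Lemma J_derive u : a < u -> is_derive J u (- gt u).
Proof. intro; apply gen_derive; auto. exact gt_cont. Qed.

Lemma J_cont u : a < u -> continuity_pt J u.
Proof.
  intro Hu. apply derivable_continuous_pt.
  eexists. apply is_derive_Reals. apply J_derive; auto.
Qed.

Lemma J_b : J b = 0.
Proof. unfold J. exact (RInt_point (V:=R_CompleteNormedModule) b gt). Qed.

Lemma J_nonneg u : a < u <= b -> 0 <= J u.
Proof.
  intros [H1 H2]. unfold J. apply RInt_ge_0; auto.
  apply gen_ex_RInt; auto. exact gt_cont. pose proof a_lt_b; lra.
  intros; left; apply gt_pos.
Qed.

Definition Ehat t := Et * exp (- delta * t) + K * exp (- delta * t) * J (W t).

Lemma E_eq t : 0 <= t -> E_of beta gamma delta St Et Rt b psi phiinv t = Ehat t.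
Proof.
  intro Ht. unfold E_of, Ehat. fold K. rewrite (W_eq t Ht).
  f_equal. f_equal. unfold J. fold w.
  destruct (w_prop t Ht) as [[H1 H2] _].
  apply RInt_ext. intros x Hx.
  rewrite Rmin_left in Hx by lra. rewrite Rmax_right in Hx by lra.
  unfold gt. rewrite Phi_eq; auto; lra.
Qed.

Definition Gt u := N - K * u + gamma / beta * ln u - psit u / beta.

Lemma psit_derive u : a < u < b -> is_derive psit u (Derive psi u).
Proof.
  intro Hu. apply is_derive_ext_loc with psi.
  - apply locally_interval with (Finite a) (Finite b); simpl; try lra.
    intros y Hy1 Hy2. rewrite psit_eq; lra.
  - apply Derive_correct. apply Hpsi_C1. fold a b; lra.
Qed.

Lemma Gt_derive u : a < u < b ->
  is_derive Gt u (- K + gamma / beta * / u - Derive psi u / beta).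
Proof.
  intro Hu. pose proof a_pos. unfold Gt. auto_derive.
  - repeat split; try lra. eexists. apply psit_derive; auto.
  - replace (Derive (fun x => psit x) u) with (Derive psi u).
    field. split; lra.
    symmetry; apply is_derive_unique, psit_derive; auto.
Qed.


Lemma cp_plus f g x : continuity_pt f x -> continuity_pt g x -> continuity_pt (fun y => f y + g y) x.
Proof. intros; exact (continuity_pt_plus f g x H H0). Qed.
Lemma cp_minus f g x : continuity_pt f x -> continuity_pt g x -> continuity_pt (fun y => f y - g y) x.
Proof. intros; exact (continuity_pt_minus f g x H H0). Qed.
Lemma cp_mult f g x : continuity_pt f x -> continuity_pt g x -> continuity_pt (fun y => f y * g y) x.
Proof. intros; exact (continuity_pt_mult f g x H H0). Qed.
Lemma cp_comp f g x : continuity_pt f x -> continuity_pt g (f x) -> continuity_pt (fun y => g (f y)) x.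
Proof. intros; exact (continuity_pt_comp f g x H H0). Qed.
Lemma cp_const c x : continuity_pt (fun _ => c) x.
Proof. exact (continuity_pt_const (fun _ => c) x (fun _ _ => eq_refl)). Qed.
Lemma cp_deriv f x : ex_derive f x -> continuity_pt f x.
Proof. intros [l H]. apply derivable_continuous_pt. exists l. apply is_derive_Reals; auto. Qed.

Lemma Ehat_derive T : 0 < T -> is_derive Ehat T (- delta * Ehat T + K * w T * psit (w T)).
Proof.
  intro HT. destruct (w_prop T (Rlt_le _ _ HT)) as [[H1 H2] H3].
  apply is_derive_ext_loc with (fun t => Et * exp (- delta * t) + K * exp (- delta * t) * J (w t)).
  { apply locally_interval with (Finite 0) p_infty; simpl; auto.
    intros y Hy _. unfold Ehat. rewrite W_eq; auto; lra. }
  unfold Ehat. rewrite W_eq by lra.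
  auto_derive.
  - split; auto. eexists; apply J_derive; auto. split; auto. eexists; apply w_derive; auto.
  - replace (Derive (fun x => J x) (w T)) with (- gt (w T)).
    2:{ symmetry; apply is_derive_unique, J_derive; auto. }
    replace (Derive (fun x => w x) T) with (- (w T * psit (w T))).
    2:{ symmetry; apply is_derive_unique, w_derive; auto. }
    unfold gt. rewrite H3.
    replace (exp (delta * T)) with (/ exp (- delta * T)).
    2:{ rewrite <- exp_Ropp. f_equal. ring. }
    pose proof (exp_pos (- delta * T)). field. lra.
Qed.

Definition H t := Et + K * J (W t) - exp (delta * t) * Gt (W t).

Lemma H_0 : H 0 = 0.
Proof.
  unfold H, Gt. rewrite W_eq by lra. rewrite w_0, J_b.
  rewrite !Rmult_0_r, exp_0, ln_b, psit_eq by lra.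
  unfold b at 2. rewrite Hpsi_u0. fold b. rewrite Kb. unfold N. field. lra.
Qed.

Lemma H_derive T : 0 < T -> is_derive H T 0.
Proof.
  intro HT. destruct (w_prop T (Rlt_le _ _ HT)) as [[H1 H2] H3].
  pose proof (w_lt_b T HT) as H4. pose proof a_pos.
  apply is_derive_ext_loc with (fun t => Et + K * J (w t) - exp (delta * t) * Gt (w t)).
  { apply locally_interval with (Finite 0) p_infty; simpl; auto.
    intros y Hy _. unfold H. rewrite W_eq; auto; lra. }
  auto_derive.
  - split. eexists; apply J_derive; auto. split. eexists; apply w_derive; auto.
    split. eexists; apply Gt_derive; auto. split; auto.
    eexists; apply w_derive; auto.
  - replace (Derive (fun x => J x) (w T)) with (- gt (w T)).
    2:{ symmetry; apply is_derive_unique, J_derive; auto. }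
    replace (Derive (fun x => w x) T) with (- (w T * psit (w T))).
    2:{ symmetry; apply is_derive_unique, w_derive; auto. }
    replace (Derive (fun x => Gt x) (w T)) with (- K + gamma / beta * / (w T) - Derive psi (w T) / beta).
    2:{ symmetry; apply is_derive_unique, Gt_derive; auto. }
    unfold gt. rewrite H3. unfold Gt. rewrite psit_eq by lra.
    set (x := w T) in *.
    assert (Hp : 0 < psi x) by (apply Hpsi_pos; fold a b; lra).
    assert (Hode := Hpsi_ode x ltac:(fold a b; lra)).
    fold N in Hode. 
    assert (HD : Derive psi x = Derive psi x * psi x / psi x) by (field; lra).
    rewrite HD.
    replace (Derive psi x * psi x) with ((gamma + delta) / x * psi x - delta *
            ((beta * N - beta * St * exp (beta / gamma * Rt) * x + gamma * ln x) / x)) by lra.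
    unfold K. field. repeat split; lra.
Qed.

Lemma Gt_cont_b : continuity_pt Gt b.
Proof.
  pose proof a_pos. pose proof a_lt_b.
  unfold Gt. apply cp_minus.
  - apply cp_deriv. auto_derive. lra.
  - apply cp_mult. apply continuity_pt_filterlim, psit_cont; lra. apply cp_const.
Qed.

Lemma H_cont0 : continuity_pt H 0.
Proof.
  pose proof a_lt_b.
  unfold H. apply cp_minus. apply cp_plus. apply cp_const.
  apply cp_mult. apply cp_const. apply cp_comp. apply W_cont; lra.
  apply J_cont. apply W_range.
  apply cp_mult. apply cp_deriv. auto_derive. auto.
  apply cp_comp. apply W_cont; lra.
  rewrite W_eq, w_0 by lra. apply Gt_cont_b.
Qed.

Lemma H_zero t : 0 <= t -> H t = 0.
Proof.
  intros [Ht|Ht]; [|subst; apply H_0].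
  assert (Hc : forall s, 0 < s <= t -> H s = H t).
  { intros s [Hs1 Hs2].
    destruct (MVT_gen H s t (fun _ => 0)) as [c [_ Hc]].
    - intros x Hx. apply H_derive. rewrite Rmin_left in Hx by lra. lra.
    - intros x Hx. apply cp_deriv. eexists. apply H_derive.
      rewrite Rmin_left in Hx by lra. lra.
    - lra. }
  destruct (Req_dec (H t) 0) as [E|E]; auto. exfalso.
  assert (Hp : 0 < Rabs (H t)) by (apply Rabs_pos_lt; auto).
  destruct (H_cont0 _ Hp) as [del [Hdel Hd]].
  set (s := Rmin del t / 2).
  assert (Hs1 : 0 < s) by (unfold s; assert (0 < Rmin del t) by (apply Rmin_glb_lt; lra); lra).
  assert (Hs2 : s < del) by (unfold s; assert (Rmin del t <= del) by apply Rmin_l; lra).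
  assert (Hs3 : s <= t) by (unfold s; assert (Rmin del t <= t) by apply Rmin_r; lra).
  assert (X := Hd s). simpl in X. unfold R_dist in X. rewrite H_0, Rminus_0_r, Rminus_0_r in X.
  rewrite (Hc s) in X by lra.
  assert (Rabs (H t) < Rabs (H t)); [|lra].
  apply X. split. split. exact I. apply Rlt_not_eq; lra. rewrite Rabs_pos_eq; lra.
Qed.

Lemma Ehat_G t : 0 <= t -> Ehat t = Gt (w t).
Proof.
  intro Ht. pose proof (H_zero t Ht). unfold H in H0. unfold Ehat.
  rewrite W_eq in * by auto.
  replace (exp (- delta * t)) with (/ exp (delta * t)).
  2:{ rewrite <- exp_Ropp. f_equal. ring. }
  pose proof (exp_pos (delta * t)). 
  replace (Gt (w t)) with ((Et + K * J (w t)) / exp (delta * t)).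
  field. lra. field_simplify_eq; lra.
Qed.

Lemma Ehat_pos t : 0 <= t -> 0 < Ehat t.
Proof.
  intro Ht. unfold Ehat. pose proof Et_pos. pose proof K_pos.
  pose proof (exp_pos (- delta * t)). pose proof (J_nonneg (W t) (W_range t)).
  assert (0 <= K * exp (- delta * t) * J (W t)).
  { apply Rmult_le_pos; auto. nra. }
  nra.
Qed.


Definition c := (a + b) / 2.
Definition Y u := psi u * psi u.
Definition h u := beta * N - beta * K * u + gamma * ln u.
Definition dY u := 2 * ((gamma + delta) * psi u * / u - delta * h u * / u).

Lemma c_prop : a < c < b.
Proof. pose proof a_lt_b. unfold c. lra. Qed.

Lemma Y_derive u : a < u < b -> is_derive Y u (dY u).
Proof.
  intro Hu. pose proof a_pos.
  assert (Hd := Hpsi_C1 u ltac:(fold a b; lra)).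
  assert (Hode := Hpsi_ode u ltac:(fold a b; lra)). fold N in Hode.
  unfold Y. auto_derive. split. apply Hd. split. apply Hd. auto.
  replace (Derive (fun x => psi x) u) with (Derive psi u) by reflexivity.
  unfold dY, h, K. 
  replace (1 * Derive psi u * psi u + psi u * (1 * Derive psi u)) with (2 * (Derive psi u * psi u)) by ring.
  replace (Derive psi u * psi u) with ((gamma + delta) / u * psi u - delta *
       ((beta * N - beta * St * exp (beta / gamma * Rt) * u + gamma * ln u) / u)) by lra.
  field. lra.
Qed.


Definition Hb := beta * Rabs N + beta * K * c + gamma * (Rabs (ln a) + Rabs (ln c)).

Lemma h_bound u : a < u <= c -> - Hb <= h u <= Hb.
Proof.
  intros [H1 H2]. pose proof a_pos. pose proof K_pos.
  assert (La : ln a < ln u) by (apply ln_increasing; auto).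
  assert (Lc : ln u <= ln c).
  { destruct H2 as [H2|H2]. left; apply ln_increasing; lra. subst; lra. }
  assert (R1 := Rle_abs N). assert (R2 := Rle_abs (- N)). rewrite Rabs_Ropp in R2.
  assert (R3 := Rle_abs (ln c)). assert (R4 := Rle_abs (- ln a)). rewrite Rabs_Ropp in R4.
  assert (0 < K * u) by nra.
  assert (K * u <= K * c) by nra.
  unfold h, Hb.
  assert (beta * N <= beta * Rabs N) by nra.
  assert (- (beta * Rabs N) <= beta * N) by nra.
  assert (gamma * ln u <= gamma * Rabs (ln c)) by nra.
  assert (- (gamma * Rabs (ln a)) <= gamma * ln u) by nra.
  assert (0 <= gamma * Rabs (ln a)) by (pose proof (Rabs_pos (ln a)); nra).
  assert (0 <= gamma * Rabs (ln c)) by (pose proof (Rabs_pos (ln c)); nra).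
  assert (beta * K * u <= beta * K * c) by nra.
  assert (0 < beta * K * u) by nra.
  split; nra.
Qed.

Lemma Hb_nonneg : 0 <= Hb.
Proof. pose proof (h_bound c ltac:(pose proof c_prop; lra)). lra. Qed.

Lemma dY_lower x : a < x <= c -> - (2 * delta * Hb / a) <= dY x.
Proof.
  intros Hx. pose proof a_pos. pose proof c_prop.
  assert (Hp : 0 < psi x) by (apply Hpsi_pos; fold a b; lra).
  pose proof (h_bound x Hx).
  assert (Hz : 0 < / x) by (apply Rinv_0_lt_compat; lra).
  assert (Hz2 : / x <= / a) by (apply Rinv_le_contravar; lra).
  assert (Hia : / a * a = 1) by (field; lra).
  unfold dY.
  assert (0 <= (gamma + delta) * psi x * / x) by (apply Rmult_le_pos; [apply Rmult_le_pos|]; lra).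
  assert (h x * / x <= Hb * / a).
  { apply Rle_trans with (Hb * / x). apply Rmult_le_compat_r; lra.
    apply Rmult_le_compat_l. apply Hb_nonneg. auto. }
  assert (delta * (h x * / x) <= delta * (Hb * / a)) by (apply Rmult_le_compat_l; lra).
  unfold Rdiv. nra.
Qed.

Definition Bpsi := 1 + Y c + 2 * delta * Hb / a * (c - a).

Lemma Y_upper u : a < u <= c -> Y u <= Y c + 2 * delta * Hb / a * (c - a).
Proof.
  intros [H1 H2]. pose proof c_prop. pose proof a_pos. pose proof Hb_nonneg.
  destruct (MVT_gen Y u c dY) as [xi [Hxi HM]].
  - intros x Hx. rewrite Rmin_left, Rmax_right in Hx by lra. apply Y_derive; lra.
  - intros x Hx. rewrite Rmin_left, Rmax_right in Hx by lra. apply cp_deriv.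
    eexists; apply Y_derive; lra.
  - rewrite Rmin_left, Rmax_right in Hxi by lra.
    pose proof (dY_lower xi ltac:(lra)).
    assert (0 <= 2 * delta * Hb / a).
    { unfold Rdiv. apply Rmult_le_pos. nra. left; apply Rinv_0_lt_compat; lra. }
    assert (- (2 * delta * Hb / a) * (c - u) <= dY xi * (c - u)) by (apply Rmult_le_compat_r; lra).
    assert (2 * delta * Hb / a * (c - u) <= 2 * delta * Hb / a * (c - a)) by (apply Rmult_le_compat_l; lra).
    lra.
Qed.

Lemma psi_le_B u : a < u <= c -> psi u <= Bpsi.
Proof.
  intro Hu. pose proof (Y_upper u Hu). unfold Bpsi. unfold Y in *.
  assert (0 <= (psi u - 1) * (psi u - 1)) by (pose proof (Rle_0_sqr (psi u - 1)); unfold Rsqr in *; lra).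
  pose proof c_prop.
  assert (Hp : 0 < psi u) by (apply Hpsi_pos; fold a b; lra).
  nra.
Qed.

Definition L := 2 * ((gamma + delta) * Bpsi / a + delta * Hb / a).

Lemma dY_bound x : a < x <= c -> Rabs (dY x) <= L.
Proof.
  intros Hx. pose proof a_pos. pose proof c_prop.
  assert (Hp : 0 < psi x) by (apply Hpsi_pos; fold a b; lra).
  pose proof (h_bound x Hx). pose proof (psi_le_B x Hx). pose proof Hb_nonneg.
  assert (Hz : 0 < / x) by (apply Rinv_0_lt_compat; lra).
  assert (Hz2 : / x <= / a) by (apply Rinv_le_contravar; lra).
  unfold dY, L, Rdiv.
  assert (A : psi x * / x <= Bpsi * / a).
  { apply Rle_trans with (Bpsi * / x). apply Rmult_le_compat_r; lra.
    apply Rmult_le_compat_l; lra. }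
  assert (B1 : h x * / x <= Hb * / a).
  { apply Rle_trans with (Hb * / x). apply Rmult_le_compat_r; lra.
    apply Rmult_le_compat_l; lra. }
  assert (B2 : - (Hb * / a) <= h x * / x).
  { apply Rle_trans with (- Hb * / x). 
    assert (Hb * / x <= Hb * / a) by (apply Rmult_le_compat_l; lra). lra.
    apply Rmult_le_compat_r; lra. }
  assert (0 <= psi x * / x) by (apply Rmult_le_pos; lra).
  apply Rabs_le. split.
  - assert (0 <= (gamma + delta) * (psi x * / x)) by (apply Rmult_le_pos; lra).
    assert ((gamma + delta) * (psi x * / x) <= (gamma + delta) * (Bpsi * / a)) by (apply Rmult_le_compat_l; lra).
    assert (delta * (h x * / x) <= delta * (Hb * / a)) by (apply Rmult_le_compat_l; lra).
    nra.
  - assert ((gamma + delta) * (psi x * / x) <= (gamma + delta) * (Bpsi * / a)) by (apply Rmult_le_compat_l; lra).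
    assert (- (delta * (Hb * / a)) <= delta * (h x * / x)) by (
      replace (- (delta * (Hb * / a))) with (delta * (- (Hb * / a))) by ring;
      apply Rmult_le_compat_l; lra).
    assert (0 <= delta * (Hb * / a)) by (apply Rmult_le_pos; [lra|apply Rmult_le_pos; lra]).
    nra.
Qed.

Lemma L_nonneg : 0 <= L.
Proof. pose proof (dY_bound c ltac:(pose proof c_prop; lra)). pose proof (Rabs_pos (dY c)). lra. Qed.

Lemma Y_lip u v : a < u <= c -> a < v <= c -> Rabs (Y u - Y v) <= L * Rabs (u - v).
Proof.
  intros Hu Hv. pose proof c_prop.
  assert (Hm : a < Rmin v u) by (apply Rmin_glb_lt; lra).
  assert (HM : Rmax v u <= c) by (apply Rmax_lub; lra).
  assert (D1 : forall x, Rmin v u < x < Rmax v u -> is_derive Y x (dY x)).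
  { intros x Hx. apply Y_derive; lra. }
  assert (D2 : forall x, Rmin v u <= x <= Rmax v u -> continuity_pt Y x).
  { intros x Hx. apply cp_deriv. eexists; apply Y_derive; lra. }
  destruct (MVT_gen Y v u dY D1 D2) as [xi [Hxi HMVT]].
  rewrite HMVT. rewrite Rabs_mult. apply Rmult_le_compat_r. apply Rabs_pos.
  apply dY_bound; lra.
Qed.

Lemma Phi_pos u : a < u < b -> 0 < Phi u.
Proof. intros [H1 H2]. rewrite <- Phi_b. apply Phi_decr; auto. Qed.

Lemma exists_small m eta : 0 < m -> 0 < eta -> a + eta <= c ->
  exists u', a < u' < a + eta /\ Y u' < m.
Proof.
  intros Hm Heta Hc. pose proof a_pos. pose proof c_prop.
  destruct (classic (exists u', a < u' < a + eta /\ Y u' < m)) as [E|E]; auto.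
  exfalso.
  assert (Hall : forall u, a < u < a + eta -> Rmin 1 m <= psi u).
  { intros u Hu. assert (Y u >= m).
    { apply Rnot_lt_ge. intro HY. apply E. exists u; auto. }
    assert (Hp : 0 < psi u) by (apply Hpsi_pos; fold a b; lra).
    unfold Y in *. destruct (Rle_or_lt 1 (psi u)).
    - apply Rle_trans with 1; auto. apply Rmin_l.
    - apply Rle_trans with m. apply Rmin_r. assert (psi u * psi u < psi u * 1) by (apply Rmult_lt_compat_l; lra).  lra. }
  set (m' := Rmin 1 m) in *.
  assert (Hm' : 0 < m') by (apply Rmin_glb_lt; lra).
  set (p := a + eta).
  assert (Hpb : a < p < b) by (unfold p; lra).
  pose proof (Phi_pos p Hpb).
  assert (Ham : 0 < a * m') by (apply Rmult_lt_0_compat; lra).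
  set (t := Phi p + eta / (a * m') + 1).
  assert (Het : 0 < eta / (a * m')) by (apply Rdiv_lt_0_compat; lra).
  assert (Ht : 0 <= t) by (unfold t; lra).
  destruct (w_prop t Ht) as [[Hw1 Hw2] Hw3].
  assert (Hwp : w t < p) by (apply w_lt; auto; unfold t; lra).
  unfold Phi in Hw3.
  rewrite <- (RInt_Chasles (V:=R_CompleteNormedModule) ft (w t) p b) in Hw3.
  2,3: apply gen_ex_RInt; auto; try exact ft_cont; lra.
  fold (Phi p) in Hw3. change plus with Rplus in Hw3. simpl in Hw3.
  assert (RInt ft (w t) p <= RInt (fun _ => / (a * m')) (w t) p).
  { apply RInt_le. lra. apply gen_ex_RInt; auto; try exact ft_cont; lra.
    apply ex_RInt_const.
    intros x Hx. unfold ft. rewrite psit_eq by lra.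
    apply Rinv_le_contravar; auto.
    apply Rmult_le_compat; lra || (apply Hall; unfold p in Hx; lra). }
  rewrite RInt_const in H3. unfold scal in H3. simpl in H3. unfold mult in H3. simpl in H3.
  assert ((p - w t) * / (a * m') <= eta * / (a * m')).
  { apply Rmult_le_compat_r. left; apply Rinv_0_lt_compat; auto. unfold p; lra. }
  unfold t, Rdiv in *. lra.
Qed.

Lemma psi_small eps : 0 < eps -> exists eta, 0 < eta /\ (forall u, a < u < a + eta -> psi u < eps).
Proof.
  intro He. pose proof c_prop. pose proof L_nonneg.
  set (e2 := eps * eps).
  assert (He2 : 0 < e2) by (unfold e2; nra).
  set (eta := Rmin (c - a) (e2 / (2 * (L + 1)))).
  assert (Heta1 : eta <= c - a) by apply Rmin_l.
  assert (Heta2 : eta <= e2 / (2 * (L + 1))) by apply Rmin_r.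
  assert (Heta : 0 < eta).
  { apply Rmin_glb_lt. lra. apply Rdiv_lt_0_compat; lra. }
  exists eta. split; auto. intros u Hu.
  destruct (exists_small (e2 / 2) eta ltac:(lra) Heta ltac:(lra)) as [u' [Hu' HY']].
  assert (HL := Y_lip u u' ltac:(lra) ltac:(lra)).
  assert (Rabs (u - u') < eta) by (apply Rabs_def1; lra).
  assert (L * Rabs (u - u') <= L * eta) by (apply Rmult_le_compat_l; lra).
  assert (L * eta <= L * (e2 / (2 * (L + 1)))) by (apply Rmult_le_compat_l; lra).
  assert (L * (e2 / (2 * (L + 1))) < e2 / 2).
  { unfold Rdiv. rewrite Rinv_mult. 
    assert (0 < / (L + 1)) by (apply Rinv_0_lt_compat; lra).
    assert (L * / (L + 1) < 1).
    { apply Rmult_lt_reg_r with (L + 1). lra. rewrite Rmult_assoc, Rinv_l by lra. lra. }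
    nra. }
  pose proof (Rle_abs (Y u - Y u')). 
  assert (Y u < e2) by lra.
  assert (Hp : 0 < psi u) by (apply Hpsi_pos; fold a b; lra).
  unfold Y, e2 in *. nra.
Qed.


Lemma Gt_small eps : 0 < eps -> exists eta, 0 < eta /\ (forall u, a < u < a + eta -> Rabs (Gt u) < eps).
Proof.
  intro He. pose proof a_pos. pose proof a_lt_b.
  assert (HQ : continuity_pt (fun u => N - K * u + gamma / beta * ln u) a).
  { apply cp_deriv. auto_derive. lra. }
  destruct (HQ (eps / 2) ltac:(lra)) as [d1 [Hd1 HQd]].
  destruct (psi_small (eps * beta / 2) ltac:(nra)) as [d2 [Hd2 Hps]].
  exists (Rmin (Rmin d1 d2) (b - a)). split.
  { apply Rmin_glb_lt; [apply Rmin_glb_lt|]; lra. }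
  intros u Hu.
  assert (Hm1 := Rmin_l (Rmin d1 d2) (b - a)).
  assert (Hm2 := Rmin_r (Rmin d1 d2) (b - a)).
  assert (Hm3 := Rmin_l d1 d2). assert (Hm4 := Rmin_r d1 d2).
  assert (X := HQd u). simpl in X. unfold R_dist in X. rewrite Qa in X.
  assert (X' : Rabs (N - K * u + gamma / beta * ln u - 0) < eps / 2).
  { apply X. split. split. exact I. apply Rlt_not_eq; lra. apply Rabs_def1; lra. }
  rewrite Rminus_0_r in X'.
  assert (Hp : 0 < psi u) by (apply Hpsi_pos; fold a b; lra).
  assert (Hp2 : psi u < eps * beta / 2) by (apply Hps; lra).
  unfold Gt. rewrite psit_eq by lra.
  apply Rabs_def2 in X'. 
  assert (0 < psi u / beta) by (apply Rdiv_lt_0_compat; lra).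
  assert (psi u / beta < eps / 2).
  { apply Rmult_lt_reg_r with beta. lra. unfold Rdiv. rewrite Rmult_assoc, Rinv_l by lra. lra. }
  apply Rabs_def1; lra.
Qed.

Lemma Ehat_lim eps : 0 < eps -> exists M, forall t, M < t -> Rabs (Ehat t) < eps.
Proof.
  intro He. destruct (Gt_small eps He) as [eta [Heta HG]].
  exists (Rmax 0 (Phi (a + eta))). intros t Ht.
  assert (H1 := Rmax_l 0 (Phi (a + eta))). assert (H2 := Rmax_r 0 (Phi (a + eta))).
  rewrite Ehat_G by lra. pose proof a_pos.
  destruct (w_prop t ltac:(lra)) as [[Hw1 _] _].
  apply HG. split; auto. apply w_lt; lra.
Qed.

Definition Dh t := - delta * Ehat t + K * W t * psit (W t).

Lemma Ehat_derive' T : 0 < T -> is_derive Ehat T (Dh T).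
Proof.
  intro HT. unfold Dh. rewrite W_eq by lra. apply Ehat_derive; auto.
Qed.

Lemma Ehat_cont t : 0 <= t -> continuity_pt Ehat t.
Proof.
  intro Ht. unfold Ehat. apply cp_plus.
  apply cp_mult. apply cp_const. apply cp_deriv. auto_derive. auto.
  apply cp_mult. apply cp_mult. apply cp_const. apply cp_deriv. auto_derive. auto.
  apply cp_comp. apply W_cont; auto. apply J_cont. apply W_range.
Qed.

Lemma Ehat_0 : Ehat 0 = Et.
Proof. unfold Ehat. rewrite W_eq, w_0, J_b by lra. rewrite Rmult_0_r, exp_0. ring. Qed.

Lemma Dh_0 : 0 < Dh 0.
Proof.
  unfold Dh. rewrite Ehat_0, W_eq, w_0 by lra. rewrite psit_eq by lra.
  unfold b at 2. rewrite Hpsi_u0. fold b. rewrite Kb.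
  pose proof Et_pos.
  assert (St * (beta * It) > delta * Et).
  { assert (Hb : 0 < beta * It) by nra.
    apply Rmult_gt_compat_r with (r := beta * It) in A3; auto.
    unfold Rdiv in A3. rewrite Rmult_assoc, Rinv_l in A3 by lra. lra. }
  nra.
Qed.

Lemma Dh_cont0 : continuity_pt Dh 0.
Proof.
  unfold Dh. apply cp_plus. apply cp_mult. apply cp_const. apply Ehat_cont; lra.
  apply cp_mult. apply cp_mult. apply cp_const. apply W_cont; lra.
  apply cp_comp. apply W_cont; lra. rewrite W_eq, w_0 by lra.
  apply continuity_pt_filterlim, psit_cont. apply a_lt_b.
Qed.

Lemma exists_bigger : exists t1, 0 < t1 /\ Ehat 0 < Ehat t1.
Proof.
  pose proof Dh_0.
  destruct (Dh_cont0 (Dh 0 / 2) ltac:(lra)) as [ep [Hep Hd]].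
  assert (Hpos : forall t, Rabs t < ep -> 0 < Dh t).
  { intros t Ht. destruct (Req_dec t 0) as [E|E]. subst; auto.
    assert (X := Hd t). simpl in X. unfold R_dist in X.
    rewrite Rminus_0_r in X. 
    assert (Hx : Rabs (Dh t - Dh 0) < Dh 0 / 2) by (apply X; split; [split; [exact I| intro Z; apply E; auto] | exact Ht]).
    apply Rabs_def2 in Hx. lra. }
  exists (ep / 2). split. lra.
  assert (D1 : forall x, Rmin 0 (ep/2) < x < Rmax 0 (ep/2) -> is_derive Ehat x (Dh x)).
  { intros x Hx. rewrite Rmin_left, Rmax_right in Hx by lra. apply Ehat_derive'; lra. }
  assert (D2 : forall x, Rmin 0 (ep/2) <= x <= Rmax 0 (ep/2) -> continuity_pt Ehat x).
  { intros x Hx. rewrite Rmin_left, Rmax_right in Hx by lra. apply Ehat_cont; lra. }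
  destruct (MVT_gen Ehat 0 (ep/2) Dh D1 D2) as [xi [Hxi HM]].
  rewrite Rmin_left, Rmax_right in Hxi by lra.
  assert (0 < Dh xi) by (apply Hpos; apply Rabs_def1; lra).
  assert (0 < Dh xi * (ep / 2 - 0)) by (apply Rmult_lt_0_compat; lra).
  lra.
Qed.

Lemma max_exists : exists T1, 0 < T1 /\ Dh T1 = 0 /\ forall t, 0 <= t -> Ehat t <= Ehat T1.
Proof.
  destruct exists_bigger as [t1 [Ht1 Hb1]].
  rewrite Ehat_0 in Hb1. pose proof Et_pos.
  destruct (Ehat_lim Et H0) as [M HM].
  set (M' := Rmax (M + 1) t1).
  assert (HM1 := Rmax_l (M + 1) t1). assert (HM2 := Rmax_r (M + 1) t1).
  destruct (continuity_ab_maj Ehat 0 M' ltac:(unfold M'; lra)) as [T1 [HT1 HT1r]].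
  { intros x Hx. apply Ehat_cont; lra. }
  assert (Hglob : forall t, 0 <= t -> Ehat t <= Ehat T1).
  { intros t Ht. destruct (Rle_or_lt t M') as [H|H].
    - apply HT1; lra.
    - assert (X := HM t ltac:(unfold M' in *; lra)). apply Rabs_def2 in X.
      assert (Ehat t1 <= Ehat T1) by (apply HT1; unfold M'; lra). lra. }
  assert (HT0 : 0 < T1).
  { destruct HT1r as [[Hq|Hq] _]; auto. subst T1.
    assert (Hq2 : Ehat t1 <= Ehat 0) by (apply HT1; unfold M'; lra).
    rewrite Ehat_0 in Hq2. lra. }
  exists T1. split; auto. split; auto.
  assert (Hd := Ehat_derive' T1 HT0).
  apply is_derive_Reals in Hd.
  pose (pr := exist (fun l => derivable_pt_abs Ehat T1 l) (Dh T1) Hd : derivable_pt Ehat T1).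
  assert (Z := deriv_maximum Ehat 0 (T1 + 1) T1 pr HT0 ltac:(lra)
                 ltac:(intros x Hx _; apply Hglob; lra)).
  exact Z.
Qed.


Lemma E_loc T : 0 < T -> locally T (fun t => Ehat t = E_of beta gamma delta St Et Rt b psi phiinv t).
Proof.
  intro HT. apply locally_interval with (Finite 0) p_infty; simpl; auto.
  intros y Hy _. rewrite E_eq; auto; lra.
Qed.

Lemma main_sec :
  let u0 := exp (- (beta / gamma) * Rt) in
  let N := St + Et + It + Rt in
  let E := E_of beta gamma delta St Et Rt u0 psi phiinv in
  is_lim E p_infty 0
  /\ (forall t, 0 <= t -> 0 < E t)
  /\ (forall T, 0 < T ->
        is_derive E T
          ((delta / beta + St * exp (beta / gamma * Rt) * phiinv T)
             * psi (phiinv T)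
           - delta * (N - St * exp (beta / gamma * Rt) * phiinv T
                      + gamma / beta * ln (phiinv T))))
  /\ (exists T1, 0 < T1 /\ is_derive E T1 0 /\
        forall t, 0 <= t -> E t <= E T1).
Proof.
  cbv zeta. fold b.
  split; [|split; [|split]].
  - apply is_lim_spec. intro eps. destruct (Ehat_lim eps (cond_pos eps)) as [M HM].
    exists (Rmax M 0). intros x Hx.
    assert (H1 := Rmax_l M 0). assert (H2 := Rmax_r M 0).
    rewrite E_eq by lra. rewrite Rminus_0_r. apply HM. lra.
  - intros t Ht. rewrite E_eq by auto. apply Ehat_pos; auto.
  - intros T HT. apply is_derive_ext_loc with Ehat. apply E_loc; auto.
    replace (_ - _) with (Dh T). apply Ehat_derive'; auto.
    unfold Dh. rewrite W_eq by lra. rewrite Ehat_G by lra.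
    pose proof (w_lt_b T HT). rewrite psit_eq by lra. unfold Gt. rewrite psit_eq by lra.
    unfold w, K, N. field. lra.
  - destruct max_exists as [T1 [HT1 [HD Hmax]]].
    exists T1. split; auto. split.
    + apply is_derive_ext_loc with Ehat. apply E_loc; auto.
      rewrite <- HD. apply Ehat_derive'; auto.
    + intros t Ht. rewrite !E_eq by lra. apply Hmax; auto.
Qed.

End Main.

Theorem theorem9
  (beta gamma delta St Et It Rt : R)
  (Hbeta : 0 < beta) (Hgamma : 0 < gamma) (Hdelta : 0 < delta)
  (HN : 0 < St + Et + It + Rt)
  (A1 : 0 < It)
  (A2 : Et > gamma / delta * It)
  (A3 : St > delta * Et / (beta * It))
  (A4 : 0 <= Rt /\ St + Et + It + Rt > St * exp (beta / gamma * Rt) + Rt)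
  (alpha : R)
  (Halpha : Rt < alpha < St + Et + It + Rt /\
     alpha = St + Et + It + Rt
             - St * exp (beta / gamma * Rt) * exp (- (beta / gamma) * alpha))
  (A5 : St < gamma / beta * exp (beta / gamma * (alpha - Rt)))
  (psi : R -> R)
  (Hpsi_pos : forall u, exp (- (beta / gamma) * alpha) < u
                        <= exp (- (beta / gamma) * Rt) -> 0 < psi u)
  (Hpsi_cont : forall u, exp (- (beta / gamma) * alpha) < u
                         < exp (- (beta / gamma) * Rt) -> continuous psi u)
  (Hpsi_cont_u0 : filterlim psi (at_left (exp (- (beta / gamma) * Rt)))
                    (locally (psi (exp (- (beta / gamma) * Rt)))))
  (Hpsi_C1 : forall u, exp (- (beta / gamma) * alpha) < u
                       < exp (- (beta / gamma) * Rt) ->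
     ex_derive psi u /\ continuous (Derive psi) u)
  (Hpsi_ode : forall u, exp (- (beta / gamma) * alpha) < u
                        < exp (- (beta / gamma) * Rt) ->
     Derive psi u * psi u - (gamma + delta) / u * psi u
     = - delta * ((beta * (St + Et + It + Rt)
                   - beta * St * exp (beta / gamma * Rt) * u
                   + gamma * ln u) / u))
  (Hpsi_u0 : psi (exp (- (beta / gamma) * Rt)) = beta * It)
  (phiinv : R -> R)
  (Hphiinv : forall t, 0 <= t ->
     exp (- (beta / gamma) * alpha) < phiinv t <= exp (- (beta / gamma) * Rt)
     /\ phi_of psi (exp (- (beta / gamma) * Rt)) (phiinv t) = t) :
  let u0 := exp (- (beta / gamma) * Rt) in
  let N := St + Et + It + Rt in
  let E := E_of beta gamma delta St Et Rt u0 psi phiinv in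
  is_lim E p_infty 0
  /\ (forall t, 0 <= t -> 0 < E t)
  /\ (forall T, 0 < T ->
        is_derive E T
          ((delta / beta + St * exp (beta / gamma * Rt) * phiinv T)
             * psi (phiinv T)
           - delta * (N - St * exp (beta / gamma * Rt) * phiinv T
                      + gamma / beta * ln (phiinv T))))
  /\ (exists T1, 0 < T1 /\ is_derive E T1 0 /\
        forall t, 0 <= t -> E t <= E T1).
Proof.
  eapply main_sec; eassumption.
Qed.
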